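(* Let $T$ be the Lr $(\mathbf a,\tau)$ interval exchange transformation, and assume that $\tau$ is irreducible and fully split and that $T$ satisfies the Keane Condition. Then the associated subshift $(X,S)$ has no doubly asymptotic pair of distinct points: if $\alpha,\beta\in X$ and there is $N\in\mathbb N$ with $\alpha_i=\beta_i$ for all $|i|\ge N$, then $\alpha=\beta$.
   Context: Fix $n\ge 2$, $[n]=\{1,\dots,n\}$, a vector $\mathbf a=(a_1,\dots,a_n)$ with all $a_i>0$ and $\sum_i a_i=1$, and a permutation $\tau$ of $[n]$. Put $b_0=0$, $b_i=\sum_{j=1}^i a_j$, $J_i=[b_{i-1},b_i)$, $\tilde J_i=(b_{i-1},b_i]$ for $i\in[n]$, and $D=\{b_1,\dots,b_{n-1}\}$. Put $b^\tau_0=0$, $b^\tau_i=\sum_{j=1}^i a_{\tau^{-1}(j)}$, $D^\tau=\{b^\tau_1,\dots,b^\tau_{n-1}\}$. The Lr $(\mathbf a,\tau)$ interval exchange transformation $T:[0,1)\to[0,1)$ and its dual $\tilde T:(0,1]\to(0,1]$ are defined by $x\mapsto x-b_{i-1}+b^\tau_{\tau(i)-1}$ for $x\in J_i$ (resp. $x\in\tilde J_i$); both are bijections. $\tau$ is irreducible if $\tau(\{1,\dots,j\})\ne\{1,\dots,j\}$ for $j=1,\dots,n-1$; split if $\tau(j+1)\ne\tau(j)+1$ for $j=1,\dots,n-1$; fully split if it is split and moreover $\tau(1)\ne\tau(n)+1$ and $\tau^{-1}(1)\ne\tau^{-1}(n)+1$. $T$ satisfies the Keane Condition if $D\cap T^k(D)=\emptyset$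 for all $k\in\mathbb N$. Let $\Omega=[n]^{\mathbb Z}$ with the product topology and shift $S(\alpha)_i=\alpha_{i+1}$. The itinerary maps $\mathcal I:[0,1)\to\Omega$, $\tilde{\mathcal I}:(0,1]\to\Omega$ are $\mathcal I(x)_k=i\iff T^kx\in J_i$ and $\tilde{\mathcal I}(x)_k=i\iff\tilde T^kx\in\tilde J_i$ ($k\in\mathbb Z$). Let $D_\infty=\{0,1\}\cup\bigcup_{k\in\mathbb Z}T^k(D)$, $R=[0,1]\setminus D_\infty$ (the regular points), $X_0=\mathcal I(R)$, and $X=\overline{X_0}$; $(X,S)$ is the associated subshift. *)

(* Defs.v *)
From Stdlib Require Import Reals ZArith Lra Lia.
Open Scope R_scope.

(* Data: n, lengths a : nat -> R (a i for i in 1..n), a permutation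
   tau of {1..n} given together with its inverse tauinv. *)

Definition is_perm (n : nat) (tau tauinv : nat -> nat) : Prop :=
  forall i, (1 <= i <= n)%nat ->
    (1 <= tau i <= n)%nat /\ (1 <= tauinv i <= n)%nat /\
    tauinv (tau i) = i /\ tau (tauinv i) = i.

Fixpoint bsum (a : nat -> R) (i : nat) : R :=
  match i with
  | O => 0
  | S k => bsum a k + a (S k)
  end.

Definition btau (a : nat -> R) (tauinv : nat -> nat) (i : nat) : R :=
  bsum (fun j => a (tauinv j)) i.

Definition inJ (a : nat -> R) (i : nat) (x : R) : Prop :=
  bsum a (i - 1) <= x < bsum a i.

(* T on [0,1): x in J_i  |->  x - b_{i-1} + b^tau_{tau(i)-1}.
   Tloop k x searches the interval index among 1..k (from k downward). *)
Fixpoint Tloop (a : nat -> R) (tau tauinv : nat -> nat) (k : nat) (x : R) : R :=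
  match k with
  | O => x
  | S k' => if Rle_dec (bsum a k') x
            then x - bsum a k' + btau a tauinv (tau (S k') - 1)
            else Tloop a tau tauinv k' x
  end.

Definition IET (n : nat) (a : nat -> R) (tau tauinv : nat -> nat) (x : R) : R :=
  Tloop a tau tauinv n x.

(* Tpow n a tau tauinv k x y  <->  T^k x = y  (k : Z), on [0,1);
   negative powers via the inverse of the bijection T. *)
Definition Tpow (n : nat) (a : nat -> R) (tau tauinv : nat -> nat)
  (k : Z) (x y : R) : Prop :=
  ((0 <= k)%Z /\ Nat.iter (Z.to_nat k) (IET n a tau tauinv) x = y) \/
  ((k < 0)%Z /\ 0 <= y < 1 /\
     Nat.iter (Z.to_nat (- k)) (IET n a tau tauinv) y = x).

Definition inD (n : nat) (a : nat -> R) (x : R) : Prop :=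
  exists i, (1 <= i <= n - 1)%nat /\ x = bsum a i.

Definition irreducible (n : nat) (tau : nat -> nat) : Prop :=
  forall j, (1 <= j <= n - 1)%nat ->
    ~ ((forall i, (1 <= i <= j)%nat -> (1 <= tau i <= j)%nat) /\
       (forall m, (1 <= m <= j)%nat -> exists i, (1 <= i <= j)%nat /\ tau i = m)).

Definition split_perm (n : nat) (tau : nat -> nat) : Prop :=
  forall j, (1 <= j <= n - 1)%nat -> tau (S j) <> (tau j + 1)%nat.

Definition fully_split (n : nat) (tau tauinv : nat -> nat) : Prop :=
  split_perm n tau /\ tau 1%nat <> (tau n + 1)%nat /\
  tauinv 1%nat <> (tauinv n + 1)%nat.

Definition keane (n : nat) (a : nat -> R) (tau tauinv : nat -> nat) : Prop :=
  forall (k : nat), (1 <= k)%nat ->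
    forall x, inD n a x -> ~ inD n a (Nat.iter k (IET n a tau tauinv) x).

Definition inDinf (n : nat) (a : nat -> R) (tau tauinv : nat -> nat) (x : R) : Prop :=
  x = 0 \/ x = 1 \/
  exists (k : Z) (d : R), inD n a d /\ Tpow n a tau tauinv k d x.

Definition regular (n : nat) (a : nat -> R) (tau tauinv : nat -> nat) (x : R) : Prop :=
  0 <= x <= 1 /\ ~ inDinf n a tau tauinv x.

Definition word := Z -> nat.

Definition is_itinerary (n : nat) (a : nat -> R) (tau tauinv : nat -> nat)
  (x : R) (alpha : word) : Prop :=
  forall k : Z, (1 <= alpha k <= n)%nat /\
    exists y, Tpow n a tau tauinv k x y /\ inJ a (alpha k) y.

Definition inX0 (n : nat) (a : nat -> R) (tau tauinv : nat -> nat) (alpha : word) : Prop :=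
  exists x, regular n a tau tauinv x /\ is_itinerary n a tau tauinv x alpha.

(* X = closure of X_0 in the product topology of [n]^Z (discrete [n]):
   every cylinder around alpha meets X_0. *)
Definition inX (n : nat) (a : nat -> R) (tau tauinv : nat -> nat) (alpha : word) : Prop :=
  forall M : nat, exists beta, inX0 n a tau tauinv beta /\
    forall k : Z, (Z.abs k <= Z.of_nat M)%Z -> alpha k = beta k.

(* Main.v *)
Require Import Defs.
From Stdlib Require Import Reals ZArith Lra Lia List Permutation Classical ClassicalEpsilon.
Open Scope R_scope.

Lemma bsum_mono_gen (n : nat) (f : nat -> R) (Hf : forall i, (1<=i<=n)%nat -> 0 < f i) :
  forall p q, (p <= q <= n)%nat -> bsum f p <= bsum f q.
Proof.
  intros p q [Hpq Hqn]. revert Hqn. induction Hpq; intros Hqn. lra.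
  simpl. specialize (Hf (S m) ltac:(lia)). assert (bsum f p <= bsum f m) by (apply IHHpq; lia). lra.
Qed.

Lemma bsum_lt_gen (n : nat) (f : nat -> R) (Hf : forall i, (1<=i<=n)%nat -> 0 < f i) :
  forall p q, (p < q <= n)%nat -> bsum f p < bsum f q.
Proof.
  intros p q H. destruct q as [|q]. lia. simpl.
  assert (bsum f p <= bsum f q) by (apply (bsum_mono_gen n); auto; lia).
  specialize (Hf (S q) ltac:(lia)). lra.
Qed.

Lemma fold_plus_acc (l : list R) (x : R) :
  fold_right Rplus x l = fold_right Rplus 0 l + x.
Proof. induction l; simpl; lra. Qed.

Lemma bsum_fold (f : nat -> R) k : bsum f k = fold_right Rplus 0 (map f (seq 1 k)).
Proof.
  induction k. reflexivity.
  rewrite seq_S, map_app, fold_right_app. simpl. rewrite fold_plus_acc, <- IHk.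
  replace (1 + k)%nat with (S k) by lia. lra.
Qed.

Lemma fold_perm (l l' : list R) : Permutation l l' -> fold_right Rplus 0 l = fold_right Rplus 0 l'.
Proof. induction 1; simpl; lra. Qed.

Lemma btau_n (n : nat) (a : nat -> R) (tau tauinv : nat -> nat) :
  is_perm n tau tauinv -> btau a tauinv n = bsum a n.
Proof.
  intros Hp. unfold btau. rewrite !bsum_fold.
  replace (map (fun j => a (tauinv j)) (seq 1 n)) with (map a (map tauinv (seq 1 n)))
    by (rewrite map_map; reflexivity).
  apply fold_perm, Permutation_map, Permutation_map_same_l.
  - apply FinFun.Injective_map_NoDup_in; [|apply seq_NoDup].
    intros x y Hx Hy E. apply in_seq in Hx, Hy.
    destruct (Hp x ltac:(lia)) as (_&_&_&E1). destruct (Hp y ltac:(lia)) as (_&_&_&E2).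
    rewrite <- E1, <- E2, E. reflexivity.
  - intros x Hx. apply in_map_iff in Hx. destruct Hx as (y&<-&Hy). apply in_seq in Hy.
    apply in_seq. destruct (Hp y ltac:(lia)) as (_&H&_). lia.
Qed.

Section S.
Variables (n : nat) (a : nat -> R) (tau tauinv : nat -> nat).
Hypotheses (Hn : (2 <= n)%nat) (Hpos : forall i, (1 <= i <= n)%nat -> 0 < a i)
  (Hsum : bsum a n = 1) (Hperm : is_perm n tau tauinv)
  (Hirr : irreducible n tau) (Hfs : fully_split n tau tauinv) (Hkeane : keane n a tau tauinv).

Local Notation T := (IET n a tau tauinv).
Local Notation b := (bsum a).
Local Notation bt := (btau a tauinv).

Lemma b_le p q : (p <= q <= n)%nat -> b p <= b q.
Proof. apply (bsum_mono_gen n); auto. Qed.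
Lemma b_lt p q : (p < q <= n)%nat -> b p < b q.
Proof. apply (bsum_lt_gen n); auto. Qed.
Lemma Hposinv : forall i, (1 <= i <= n)%nat -> 0 < a (tauinv i).
Proof. intros i Hi. apply Hpos. destruct (Hperm i Hi) as (_&H&_). exact H. Qed.
Lemma bt_le p q : (p <= q <= n)%nat -> bt p <= bt q.
Proof. apply (bsum_mono_gen n). apply Hposinv. Qed.
Lemma bt_lt p q : (p < q <= n)%nat -> bt p < bt q.
Proof. apply (bsum_lt_gen n). apply Hposinv. Qed.
Lemma bt_n : bt n = 1.
Proof. rewrite (btau_n n a tau tauinv); auto. Qed.

Lemma b_lt_inv p q : (p <= n)%nat -> (q <= n)%nat -> b p < b q -> (p < q)%nat.
Proof. intros. destruct (Nat.lt_ge_cases p q). auto. assert (b q <= b p) by (apply b_le; lia). lra. Qed.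
Lemma b_le_inv p q : (p <= n)%nat -> (q <= n)%nat -> b p <= b q -> (p <= q)%nat.
Proof. intros. destruct (Nat.le_gt_cases p q). auto. assert (b q < b p) by (apply b_lt; lia). lra. Qed.
Lemma b_inj p q : (p <= n)%nat -> (q <= n)%nat -> b p = b q -> p = q.
Proof. intros. apply Nat.le_antisymm; apply b_le_inv; auto; lra. Qed.

Lemma b_nonneg p : (p <= n)%nat -> 0 <= b p.
Proof. intros. apply (b_le 0 p). lia. Qed.
Lemma b_le1 p : (p <= n)%nat -> b p <= 1.
Proof. intros. rewrite <- Hsum. apply b_le. lia. Qed.

Lemma inJ_exists x : 0 <= x < 1 -> exists t, (1 <= t <= n)%nat /\ inJ a t x.
Proof.
  intros Hx. assert (H: forall k, (k <= n)%nat -> x < b k -> exists t, (1 <= t <= k)%nat /\ inJ a t x).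
  { induction k; intros Hk Hxk. simpl in Hxk. lra.
    destruct (Rle_lt_dec (b k) x).
    - exists (S k). split. lia. unfold inJ. replace (S k - 1)%nat with k by lia. lra.
    - destruct (IHk ltac:(lia) r) as (t&Ht&HJ). exists t. split. lia. auto. }
  apply (H n). lia. lra.
Qed.

Lemma inJ_unique t t' x : (1 <= t <= n)%nat -> (1 <= t' <= n)%nat -> inJ a t x -> inJ a t' x -> t = t'.
Proof.
  unfold inJ. intros Ht Ht' [H1 H2] [H3 H4].
  assert (b (t-1) < b t') by lra. assert (b (t'-1) < b t) by lra.
  apply b_lt_inv in H; [|lia|lia]. apply b_lt_inv in H0; [|lia|lia]. lia.
Qed.

Lemma Tloop_J k t x : (k <= n)%nat -> (1 <= t <= k)%nat -> inJ a t x ->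
  Tloop a tau tauinv k x = x - b (t-1) + bt (tau t - 1).
Proof.
  induction k; intros Hk Ht HJ. lia.
  simpl. destruct (Rle_dec (b k) x).
  - assert (t = S k).
    { destruct (Nat.eq_dec t (S k)); auto. unfold inJ in HJ. assert (b t <= b k) by (apply b_le; lia). lra. }
    subst t. replace (S k - 1)%nat with k by lia. reflexivity.
  - apply IHk; auto; try lia. destruct (Nat.eq_dec t (S k)); try lia. subst t.
    unfold inJ in HJ. replace (S k - 1)%nat with k in HJ by lia. lra.
Qed.

Lemma T_J t x : (1 <= t <= n)%nat -> inJ a t x -> T x = x - b (t-1) + bt (tau t - 1).
Proof. intros. unfold IET. apply Tloop_J; auto; lia. Qed.

Lemma bt_tau t : (1 <= t <= n)%nat -> bt (tau t) = bt (tau t - 1) + a t.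
Proof.
  intros Ht. destruct (Hperm t Ht) as (H1&_&E&_).
  unfold btau. replace (tau t) with (S (tau t - 1)) at 1 by lia. simpl.
  replace (S (tau t - 1)) with (tau t) by lia. rewrite E. reflexivity.
Qed.

Lemma b_step t : (1 <= t)%nat -> b t = b (t-1) + a t.
Proof. intros. replace t with (S (t-1)) at 1 by lia. simpl. replace (S (t-1)) with t by lia. reflexivity. Qed.

Lemma T_range_J t x : (1 <= t <= n)%nat -> inJ a t x ->
  bt (tau t - 1) <= T x < bt (tau t).
Proof.
  intros Ht HJ. rewrite (T_J t x Ht HJ), (bt_tau t Ht). unfold inJ in HJ.
  rewrite (b_step t) in HJ by lia. lra.
Qed.

Lemma T_range x : 0 <= x < 1 -> 0 <= T x < 1.
Proof.
  intros Hx. destruct (inJ_exists x Hx) as (t&Ht&HJ). pose proof (T_range_J t x Ht HJ).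
  destruct (Hperm t Ht) as (H1&_).
  assert (0 <= bt (tau t - 1)) by (apply (bt_le 0); lia).
  assert (bt (tau t) <= 1) by (rewrite <- bt_n; apply bt_le; lia). lra.
Qed.

Lemma T_inj x y : 0 <= x < 1 -> 0 <= y < 1 -> T x = T y -> x = y.
Proof.
  intros Hx Hy E. destruct (inJ_exists x Hx) as (t&Ht&HJ). destruct (inJ_exists y Hy) as (s&Hs&HJ').
  destruct (Nat.eq_dec t s).
  - subst s. rewrite (T_J t x Ht HJ), (T_J t y Ht HJ') in E. lra.
  - pose proof (T_range_J t x Ht HJ). pose proof (T_range_J s y Hs HJ').
    destruct (Hperm t Ht) as (Ht1&_&Et&_). destruct (Hperm s Hs) as (Hs1&_&Es&_).
    assert (tau t <> tau s) by (intro E'; apply n0; rewrite <- Et, <- Es, E'; reflexivity).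
    destruct (Nat.lt_ge_cases (tau t) (tau s)).
    + assert (bt (tau t) <= bt (tau s - 1)) by (apply bt_le; lia). lra.
    + assert (bt (tau s) <= bt (tau t - 1)) by (apply bt_le; lia). lra.
Qed.

Lemma it_range k x : 0 <= x < 1 -> 0 <= Nat.iter k T x < 1.
Proof. intros. induction k; simpl; auto. apply T_range; auto. Qed.

Lemma it_inj k x y : 0 <= x < 1 -> 0 <= y < 1 -> Nat.iter k T x = Nat.iter k T y -> x = y.
Proof.
  induction k; simpl; intros; auto. apply IHk; auto. apply T_inj; auto; apply it_range; auto.
Qed.

Lemma it_comm j k x : Nat.iter j T (Nat.iter k T x) = Nat.iter k T (Nat.iter j T x).
Proof. rewrite <- !Nat.iter_add. rewrite Nat.add_comm. reflexivity. Qed.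

Lemma it_S k x : Nat.iter (S k) T x = Nat.iter k T (T x).
Proof. replace (S k) with (k + 1)%nat by lia. rewrite Nat.iter_add. reflexivity. Qed.


Local Notation it k x := (Nat.iter k T x).

Lemma RC1 x : 0 <= x < 1 -> exists d, 0 < d /\ forall e, 0 <= e < d -> T (x+e) = T x + e.
Proof.
  intros Hx. destruct (inJ_exists x Hx) as (t&Ht&HJ). exists (b t - x). split. unfold inJ in HJ; lra.
  intros e He. assert (HJ' : inJ a t (x+e)) by (unfold inJ in *; lra).
  rewrite (T_J t _ Ht HJ'), (T_J t _ Ht HJ). lra.
Qed.

Lemma RCk k x : 0 <= x < 1 -> exists d, 0 < d /\ forall e, 0 <= e < d -> it k (x+e) = it k x + e.
Proof.
  intros Hx. induction k. exists 1. split. lra. intros; reflexivity.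
  destruct IHk as (d1&Hd1&H1). destruct (RC1 (it k x) (it_range k x Hx)) as (d2&Hd2&H2).
  exists (Rmin d1 d2). split. apply Rmin_pos; auto. intros e He.
  pose proof (Rmin_l d1 d2). pose proof (Rmin_r d1 d2).
  simpl. rewrite H1 by lra. apply H2. lra.
Qed.

Lemma inD_val x : inD n a x -> exists i, (1 <= i <= n-1)%nat /\ x = b i /\ 0 < x < 1.
Proof.
  intros (i&Hi&->). exists i. split; auto. split; auto.
  assert (b 0 < b i) by (apply b_lt; lia). assert (b i < b n) by (apply b_lt; lia). simpl in H. lra.
Qed.

Lemma LC1 x : 0 < x < 1 -> ~ inD n a x -> exists d, 0 < d /\ forall e, 0 < e < d -> T (x-e) = T x - e.
Proof.
  intros Hx HD. destruct (inJ_exists x ltac:(lra)) as (t&Ht&HJ).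
  assert (b (t-1) < x).
  { unfold inJ in HJ. destruct (Req_dec (b (t-1)) x); [|lra].
    destruct (Nat.eq_dec t 1). subst t. simpl in H. lra.
    exfalso. apply HD. exists (t-1)%nat. split. lia. auto. }
  exists (x - b (t-1)). split. lra. intros e He.
  assert (HJ' : inJ a t (x-e)) by (unfold inJ in *; lra).
  rewrite (T_J t _ Ht HJ'), (T_J t _ Ht HJ). lra.
Qed.

Lemma LCk k x : 0 <= x < 1 -> (forall j, (j < k)%nat -> 0 < it j x /\ ~ inD n a (it j x)) ->
  exists d, 0 < d /\ forall e, 0 < e < d -> it k (x-e) = it k x - e.
Proof.
  intros Hx. induction k; intros Hj. exists 1. split. lra. intros; reflexivity.
  destruct IHk as (d1&Hd1&H1). intros j Hjk. apply Hj. lia.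
  destruct (Hj k ltac:(lia)) as [Hp HD]. pose proof (it_range k x Hx).
  destruct (LC1 (it k x) ltac:(lra) HD) as (d2&Hd2&H2).
  exists (Rmin d1 d2). split. apply Rmin_pos; auto. intros e He.
  pose proof (Rmin_l d1 d2). pose proof (Rmin_r d1 d2).
  simpl. rewrite H1 by lra. apply H2. lra.
Qed.

Lemma tauinv1 : (2 <= tauinv 1%nat <= n)%nat.
Proof.
  destruct (Hperm 1%nat ltac:(lia)) as (_&H1&_&E).
  destruct (Nat.eq_dec (tauinv 1%nat) 1); [|lia]. exfalso. rewrite e in E.
  apply (Hirr 1%nat ltac:(lia)). split.
  - intros i Hi. replace i with 1%nat by lia. lia.
  - intros m Hm. exists 1%nat. split. lia. lia.
Qed.

Lemma T_left t : (1 <= t <= n)%nat -> T (b (t-1)) = bt (tau t - 1).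
Proof.
  intros Ht. assert (HJ : inJ a t (b (t-1))).
  { unfold inJ. split. lra. apply b_lt. lia. }
  rewrite (T_J t _ Ht HJ). lra.
Qed.

Definition d0 := b (tauinv 1%nat - 1).
Lemma d0_D : inD n a d0.
Proof. pose proof tauinv1. exists (tauinv 1%nat - 1)%nat. split. lia. reflexivity. Qed.
Lemma T_d0 : T d0 = 0.
Proof.
  pose proof tauinv1. unfold d0. rewrite T_left by lia.
  destruct (Hperm 1%nat ltac:(lia)) as (_&_&_&E). rewrite E. reflexivity.
Qed.

Lemma b_range t : (t <= n-1)%nat -> 0 <= b t < 1.
Proof. intros. split. apply b_nonneg; lia. rewrite <- Hsum. apply b_lt. lia. Qed.

Lemma keaneP k x : (1 <= k)%nat -> inD n a x -> ~ inD n a (it k x).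
Proof. intros. apply Hkeane; auto. Qed.

Lemma no_fix_D p e : (1 <= p)%nat -> inD n a e -> it p e <> e.
Proof. intros Hp He E. apply (keaneP p e Hp He). rewrite E. auto. Qed.

Lemma d0_range : 0 <= d0 < 1.
Proof. pose proof tauinv1. apply b_range. lia. Qed.

Lemma no_fix_0 p : (1 <= p)%nat -> it p 0 <> 0.
Proof.
  intros Hp E. apply (no_fix_D p d0 Hp d0_D).
  apply T_inj. apply it_range, d0_range. apply d0_range.
  rewrite T_d0. change (T (it p d0)) with (it (S p) d0). rewrite it_S, T_d0. auto.
Qed.

Lemma orbit_ok t : (t <= n-1)%nat -> T (b t) <> 0 ->
  forall j, 0 < it j (T (b t)) /\ ~ inD n a (it j (T (b t))).
Proof.
  intros Ht HT0 j. rewrite <- it_S. pose proof (b_range t Ht) as Hc.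
  pose proof d0_range as Hd. pose proof d0_D as HdD.
  split.
  - pose proof (it_range (S j) _ Hc). destruct (Req_dec (it (S j) (b t)) 0); [|lra]. exfalso.
    destruct j. simpl in H0. auto.
    assert (E : it (S j) (b t) = d0).
    { apply T_inj. apply it_range; auto. auto. rewrite T_d0. exact H0. }
    destruct (Nat.eq_dec t 0).
    + subst t. change (b 0) with 0 in E. apply (no_fix_D (S (S j)) d0 ltac:(lia) HdD).
      rewrite it_S, T_d0. exact E.
    + apply (keaneP (S j) (b t) ltac:(lia)). exists t. split. lia. auto. rewrite E. auto.
  - destruct (Nat.eq_dec t 0).
    + subst t. change (b 0) with 0. intro HD.
      apply (keaneP (S (S j)) d0 ltac:(lia) HdD). rewrite it_S, T_d0. exact HD.
    + apply keaneP. lia. exists t. split. lia. auto.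
Qed.

Lemma no_periodic p s : (1 <= p)%nat -> 0 <= s < 1 -> it p s <> s.
Proof.
  intros Hp Hs Hfix.
  set (E := fun w => 0 <= w <= s /\ forall z, w <= z <= s -> it p z = z).
  set (E' := fun y => E (-y)).
  assert (Hb : bound E'). { exists 0. intros y [Hy _]. lra. }
  assert (Hne : exists y, E' y).
  { exists (-s). unfold E', E. rewrite Ropp_involutive. split. lra.
    intros z Hz. replace z with s by lra. auto. }
  destruct (completeness E' Hb Hne) as (m&Hub&Hlub).
  set (ws := -m).
  assert (F1 : forall w, E w -> ws <= w).
  { intros w Hw. assert (-w <= m). apply Hub. unfold E'. rewrite Ropp_involutive. auto. unfold ws. lra. }
  assert (F2 : forall c, (forall w, E w -> c <= w) -> c <= ws).
  { intros c Hc. assert (m <= -c). apply Hlub. intros y Hy. apply Hc in Hy. lra. unfold ws. lra. }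
  assert (Hs0 : E s). { split. lra. intros z Hz. replace z with s by lra. auto. }
  assert (Hws1 : ws <= s) by (apply F1; auto).
  assert (Hws0 : 0 <= ws). { apply F2. intros w [Hw _]. lra. }
  assert (F3 : forall z, ws < z -> z <= s -> it p z = z).
  { intros z Hz1 Hz2. destruct (classic (exists w, E w /\ w <= z)) as [(w&Hw&Hwz)|Hno].
    - apply (proj2 Hw). lra.
    - exfalso. assert (z <= ws). apply F2. intros w Hw.
      destruct (Rle_lt_dec z w); auto. exfalso. apply Hno. exists w. split; auto. lra. lra. }
  assert (Hfw : it p ws = ws).
  { destruct (Req_dec ws s). rewrite H; auto.
    destruct (RCk p ws ltac:(lra)) as (d&Hd&Hr).
    set (e := Rmin (d/2) ((s-ws)/2)).
    assert (0 < e) by (apply Rmin_pos; lra).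
    assert (e <= d/2) by apply Rmin_l. assert (e <= (s-ws)/2) by apply Rmin_r.
    specialize (Hr e ltac:(lra)). rewrite F3 in Hr by lra. lra. }
  assert (Hex : exists j, (j < p)%nat /\ (it j ws = 0 \/ inD n a (it j ws))).
  { apply NNPP. intro Hno.
    assert (Hall : forall j, (j < p)%nat -> 0 < it j ws /\ ~ inD n a (it j ws)).
    { intros j Hj. pose proof (it_range j ws ltac:(lra)). split.
      - destruct (Req_dec (it j ws) 0); [|lra]. exfalso. apply Hno. exists j. auto.
      - intro HD. apply Hno. exists j. auto. }
    destruct (LCk p ws ltac:(lra) Hall) as (d&Hd&Hl).
    assert (Hwp : 0 < ws) by (apply (Hall 0%nat); lia).
    set (e := Rmin (d/2) (ws/2)).
    assert (0 < e) by (apply Rmin_pos; lra).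
    assert (e <= d/2) by apply Rmin_l. assert (e <= ws/2) by apply Rmin_r.
    assert (HE : E (ws - e)).
    { split. lra. intros z Hz. destruct (Rlt_le_dec z ws).
      - replace z with (ws - (ws - z)) by lra. rewrite Hl by lra. lra.
      - destruct (Req_dec z ws). subst z; auto. apply F3; lra. }
    apply F1 in HE. lra. }
  destruct Hex as (j&Hj&[H0|HD]).
  - apply (no_fix_0 p Hp). rewrite <- H0 at 2. rewrite <- H0, it_comm, Hfw. reflexivity.
  - apply (no_fix_D p _ Hp HD). rewrite it_comm, Hfw. reflexivity.
Qed.

Lemma div_nonneg x y : 0 <= x -> 0 < y -> 0 <= x / y.
Proof. intros. unfold Rdiv. apply Rmult_le_pos; auto. left; apply Rinv_0_lt_compat; auto. Qed.

Lemma pigeon N (f : nat -> nat) : (forall j, (j <= N)%nat -> (f j < N)%nat) ->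
  exists i j, (i < j <= N)%nat /\ f i = f j.
Proof.
  revert f. induction N; intros f Hf. specialize (Hf 0%nat ltac:(lia)). lia.
  destruct (classic (exists i, (i <= N)%nat /\ f i = f (S N))) as [(i&Hi&E)|Hno].
  - exists i, (S N). split. lia. auto.
  - set (v := f (S N)).
    set (g := fun j => if Nat.ltb (f j) v then f j else (f j - 1)%nat).
    destruct (IHN g) as (i&j&Hij&E).
    + intros j Hj. unfold g. assert (f j <> v) by (intro; apply Hno; exists j; auto).
      pose proof (Hf j ltac:(lia)) as Hfj. pose proof (Hf (S N) ltac:(lia)) as H0. fold v in H0.
      destruct (Nat.ltb_spec (f j) v); lia.
    + exists i, j. split. lia. unfold g in E.
      assert (f i <> v) by (intro; apply Hno; exists i; split; [lia|auto]).
      assert (f j <> v) by (intro; apply Hno; exists j; split; [lia|auto]).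
      destruct (Nat.ltb_spec (f i) v); destruct (Nat.ltb_spec (f j) v); lia.
Qed.

Lemma up_cell x : 0 <= x -> (1 <= up x)%Z /\ IZR (up x) - 1 <= x < IZR (up x).
Proof.
  intros Hx. destruct (archimed x) as [H1 H2]. split; [|lra].
  apply le_IZR. simpl. assert (0 < IZR (up x)) by lra.
  apply lt_IZR in H. apply IZR_le. lia.
Qed.

Lemma INR_big c : 0 < c -> exists k : nat, 1 < INR k * c.
Proof.
  intros Hc. destruct (archimed (1/c)) as [H1 _].
  assert (Hup : (0 <= up (1/c))%Z). { apply le_IZR. assert (0 < 1/c) by (apply Rdiv_lt_0_compat; lra). lra. }
  exists (Z.to_nat (up (1/c))). rewrite INR_IZR_INZ, Z2Nat.id by auto.
  apply (Rmult_lt_compat_r c) in H1; auto. unfold Rdiv in H1. rewrite Rmult_assoc, Rinv_l in H1 by lra. lra.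
Qed.

Lemma hit u v : 0 <= u < v -> v <= 1 -> exists y j, u < y < v /\ inD n a (it j y).
Proof.
  intros Huv Hv1. apply NNPP. intro Hno.
  assert (H0 : forall y j, u < y < v -> ~ inD n a (it j y)).
  { intros y j Hy HD. apply Hno. exists y, j. auto. }
  assert (LemC : forall j w1 w2, u < w1 <= w2 -> w2 < v -> it j w2 = it j w1 + (w2 - w1)).
  { induction j; intros w1 w2 Hw1 Hw2. simpl. lra.
    specialize (IHj w1 w2 Hw1 Hw2) as IH.
    pose proof (it_range j w1 ltac:(lra)) as R1. pose proof (it_range j w2 ltac:(lra)) as R2.
    destruct (inJ_exists _ R1) as (t&Ht&HJ).
    destruct (Rlt_le_dec (it j w1 + (w2 - w1)) (b t)).
    + assert (HJ2 : inJ a t (it j w2)) by (unfold inJ in *; lra).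
      simpl. rewrite (T_J t _ Ht HJ2), (T_J t _ Ht HJ). lra.
    + exfalso. set (y := w1 + (b t - it j w1)).
      assert (Hy : it j y = b t).
      { rewrite (IHj w1 y); unfold y, inJ in *; try lra. }
      assert (t <> n). { intro. subst t. rewrite Hsum in r. lra. }
      apply (H0 y j). unfold y, inJ in *; lra.
      rewrite Hy. exists t. split. lia. auto. }
  set (lam := (v - u)/3). set (u1 := u + lam).
  assert (Hlam : 0 < lam) by (unfold lam; lra).
  set (s := fun j => it j u1).
  assert (Tr : forall j r, 0 <= r <= lam -> it j (u1 + r) = s j + r).
  { intros j r Hr. unfold s. rewrite (LemC j u1 (u1 + r)); unfold u1, lam in *; lra. }
  assert (Sr : forall j, 0 <= s j < 1). { intros j. apply it_range. unfold u1, lam. lra. }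
  set (N := S (Z.to_nat (up (1/lam)))).
  set (f := fun j => Z.to_nat (up (s j / lam))).
  destruct (pigeon N f) as (i&j&Hij&Efij).
  { intros j Hj. unfold f, N.
    assert (0 <= s j / lam) by (apply div_nonneg; [apply Sr|lra]).
    destruct (up_cell _ H) as [Hu1 Hu2].
    assert (s j / lam < 1 / lam) by (apply Rmult_lt_compat_r; [apply Rinv_0_lt_compat; lra|apply Sr]).
    assert (H2 : 0 <= 1/lam) by lra. destruct (up_cell _ H2) as [Hv1' Hv2].
    assert (H3 : IZR (up (s j / lam)) < IZR (up (1/lam)) + 1) by lra.
    rewrite <- plus_IZR in H3. apply lt_IZR in H3. lia. }
  assert (Hclose : Rabs (s j - s i) < lam).
  { unfold f in Efij.
    assert (Hi0 : 0 <= s i / lam) by (apply div_nonneg; [apply Sr|lra]).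
    assert (Hj0 : 0 <= s j / lam) by (apply div_nonneg; [apply Sr|lra]).
    destruct (up_cell _ Hi0) as [A1 A2]. destruct (up_cell _ Hj0) as [B1 B2].
    assert (up (s i / lam) = up (s j / lam)) by (apply Z2Nat.inj; lia).
    rewrite H in A2. assert (Rabs (s j / lam - s i / lam) < 1) by (apply Rabs_def1; lra).
    replace (s j - s i) with (lam * (s j / lam - s i / lam)) by (field; lra).
    rewrite Rabs_mult, Rabs_pos_eq by lra. nra. }
  set (p := (j - i)%nat). set (c := s j - s i).
  assert (Hp : it p (s i) = s i + c).
  { unfold s. rewrite <- Nat.iter_add. replace (p + i)%nat with j by (unfold p; lia). unfold c, s. lra. }
  assert (Tp : forall r, 0 <= r <= lam -> it p (s i + r) = s i + r + c).
  { intros r Hr. transitivity (it j (u1 + r)).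
    - rewrite <- (Tr i r Hr), <- Nat.iter_add. replace (p + i)%nat with j by (unfold p; lia). reflexivity.
    - rewrite Tr by auto. unfold c. lra. }
  set (r0 := if Rle_dec 0 c then 0 else - c).
  assert (Hr0 : 0 <= r0 <= lam /\ 0 <= r0 + c <= lam).
  { unfold r0. apply Rabs_def2 in Hclose. fold c in Hclose. destruct (Rle_dec 0 c); lra. }
  assert (Hk : forall k, s (i + k * p)%nat = s i + INR k * c).
  { induction k. simpl. rewrite Nat.add_0_r. lra.
    assert (E1 : it (k * p)%nat (it p (it i (u1 + r0))) = s (i + S k * p)%nat + r0).
    { rewrite <- !Nat.iter_add. match goal with |- Nat.iter ?m _ _ = _ => replace m with (i + S k * p)%nat by lia end. apply Tr; lra. }
    rewrite (Tr i r0) in E1 by lra. rewrite Tp in E1 by lra.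
    replace (s i + r0 + c) with (s i + (r0 + c)) in E1 by ring.
    rewrite <- (Tr i (r0 + c)) in E1 by lra. rewrite <- Nat.iter_add in E1.
    rewrite Tr in E1 by lra. replace (k * p + i)%nat with (i + k * p)%nat in E1 by lia.
    rewrite IHk in E1. rewrite S_INR. lra. }
  assert (c = 0).
  { destruct (Rtotal_order c 0) as [Hc|[Hc|Hc]]; auto; exfalso.
    - destruct (INR_big (-c) ltac:(lra)) as (k&Hk1). specialize (Hk k). pose proof (Sr (i + k*p)%nat).
      pose proof (Sr i). lra.
    - destruct (INR_big c Hc) as (k&Hk1). specialize (Hk k). pose proof (Sr (i + k*p)%nat).
      pose proof (Sr i). pose proof (pos_INR k). lra. }
  apply (no_periodic p (s i)). unfold p; lia. apply Sr. rewrite Hp. lra.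
Qed.

Lemma INR_toZ z : (0 <= z)%Z -> INR (Z.to_nat z) = IZR z.
Proof. intros. rewrite INR_IZR_INZ, Z2Nat.id; auto. Qed.

Lemma hit_unif l : 0 < l -> exists K0, forall u v, 0 <= u -> u + l <= v -> v <= 1 ->
  exists y j, u < y < v /\ (j < K0)%nat /\ inD n a (it j y).
Proof.
  intros Hl. set (h := l/2). assert (Hh : 0 < h) by (unfold h; lra).
  assert (Cl : forall m, exists K, forall m', (m' <= m)%nat -> INR m' * h < 1 ->
     exists y j, INR m' * h < y < Rmin (INR m' * h + h) 1 /\ (j < K)%nat /\ inD n a (it j y)).
  { induction m.
    - destruct (hit (INR 0 * h) (Rmin (INR 0 * h + h) 1)) as (y&j&Hy&HD).
      + simpl. split. lra. apply Rmin_glb_lt; lra.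
      + apply Rmin_r.
      + exists (S j). intros m' Hm' _. replace m' with 0%nat by lia. exists y, j. split; auto.
    - destruct IHm as (K1&HK1). destruct (Rlt_le_dec (INR (S m) * h) 1).
      + pose proof (pos_INR (S m)).
        destruct (hit (INR (S m) * h) (Rmin (INR (S m) * h + h) 1)) as (y&j&Hy&HD).
        * split. nra. apply Rmin_glb_lt; lra.
        * apply Rmin_r.
        * exists (Nat.max K1 (S j)). intros m' Hm' Hm'h. destruct (Nat.eq_dec m' (S m)).
          -- subst m'. exists y, j. split; auto. split; auto. lia.
          -- destruct (HK1 m' ltac:(lia) Hm'h) as (y'&j'&Hy'&Hj'&HD'). exists y', j'. split; auto. split; auto. lia.
      + exists K1. intros m' Hm' Hm'h. destruct (Nat.eq_dec m' (S m)). subst m'. lra.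
        apply HK1; auto. lia. }
  destruct (Cl (Z.to_nat (up (2/l)))) as (K&HK). exists K.
  intros u v Hu Huv Hv.
  assert (Hu0 : 0 <= u / h) by (apply div_nonneg; lra).
  destruct (up_cell _ Hu0) as [U1 U2].
  set (m' := Z.to_nat (up (u/h))).
  assert (Hm : INR m' = IZR (up (u/h))) by (apply INR_toZ; lia).
  assert (Eq : u = (u/h) * h) by (field; lra).
  assert (Hm1 : u < INR m' * h) by (rewrite Hm; nra).
  assert (Hm2 : INR m' * h <= u + h) by (rewrite Hm; nra).
  assert (Hle : (m' <= Z.to_nat (up (2/l)))%nat).
  { unfold m'. destruct (archimed (2/l)) as [A1 A2].
    assert (Il : 0 < / l) by (apply Rinv_0_lt_compat; lra).
    assert (u / h <= 2 / l).
    { replace (u/h) with (2 * u * /l) by (unfold h; field; lra). unfold Rdiv.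
      assert (u <= 1) by lra. nra. }
    assert (IZR (up (u/h)) < IZR (up (2/l)) + 1) by lra.
    rewrite <- plus_IZR in H0. apply lt_IZR in H0.
    assert (H1 : 0 < IZR (up (2/l))) by (assert (0 < 2/l) by (unfold Rdiv; nra); lra).
    apply lt_IZR in H1. apply Z2Nat.inj_le; lia. }
  assert (Hhl : h < l) by (unfold h; lra). assert (Hhl2 : h + h = l) by (unfold h; lra).
  assert (Hm'1 : INR m' * h < 1) by lra.
  destruct (HK m' Hle Hm'1) as (y&j&Hy&Hj&HD). exists y, j. split; auto.
  pose proof (Rmin_l (INR m' * h + h) 1). split; lra.
Qed.

Definition letters (K : nat) (c : nat -> nat) (u v : R) :=
  forall j, (j < K)%nat -> (1 <= c j <= n)%nat /\ inJ a (c j) (it j u) /\ inJ a (c j) (it j v).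

Lemma same_letters K u v c : u <= v -> letters K c u v ->
  forall j, (j <= K)%nat -> forall w, u <= w <= v -> it j w = it j u + (w - u).
Proof.
  intros Huv HL. induction j; intros Hj w Hw. simpl. lra.
  pose proof (IHj ltac:(lia) w Hw) as E1. pose proof (IHj ltac:(lia) v (conj Huv (Rle_refl v))) as E2.
  destruct (HL j ltac:(lia)) as (Hc&HJu&HJv).
  assert (HJw : inJ a (c j) (it j w)) by (unfold inJ in *; lra).
  simpl. rewrite (T_J _ _ Hc HJw), (T_J _ _ Hc HJu). lra.
Qed.

Lemma shrink l : 0 < l -> exists K0, forall K u v c, (K0 <= K)%nat -> 0 <= u < 1 -> 0 <= v < 1 ->
  letters K c u v -> Rabs (v - u) < l.
Proof.
  intros Hl. destruct (hit_unif l Hl) as (K0&HK0). exists K0.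
  assert (Core : forall K u v c, (K0 <= K)%nat -> 0 <= u < 1 -> 0 <= v < 1 -> u <= v ->
    letters K c u v -> v - u < l).
  { intros K u v c HK Hu Hv Huv HL. destruct (Rlt_le_dec (v - u) l) as [|Hge]; auto. exfalso.
    destruct (HK0 u v ltac:(lra) ltac:(lra) ltac:(lra)) as (y&j&Hy&Hj&HD).
    pose proof (same_letters K u v c Huv HL) as SL.
    assert (Ey : it j y = it j u + (y - u)) by (apply SL; lia || lra).
    assert (Ev : it j v = it j u + (v - u)) by (apply SL; lia || lra).
    destruct (HL j ltac:(lia)) as (Hc&HJu&HJv).
    destruct (inD_val _ HD) as (t&Ht&Et&_). unfold inJ in HJu, HJv.
    assert (b (c j - 1) < b t) by lra. assert (b t < b (c j)) by lra.
    apply b_lt_inv in H; [|lia|lia]. apply b_lt_inv in H0; [|lia|lia]. lia. }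
  intros K u v c HK Hu Hv HL. destruct (Rle_lt_dec u v).
  - rewrite Rabs_pos_eq by lra. eapply Core; eauto.
  - rewrite Rabs_minus_sym, Rabs_pos_eq by lra. apply (Core K v u c); auto. lra.
    intros j Hj. destruct (HL j Hj) as (?&?&?). auto.
Qed.

Lemma left_step i e : (1 <= i <= n)%nat -> 0 < e < a i -> T (b i - e) = bt (tau i) - e.
Proof.
  intros Hi He. assert (HJ : inJ a i (b i - e)).
  { unfold inJ. rewrite (b_step i) by lia. lra. }
  rewrite (T_J i _ Hi HJ), (bt_tau i Hi), (b_step i) by lia. lra.
Qed.

Lemma local i P : (1 <= i <= n-1)%nat -> (1 <= P)%nat ->
  exists G d, 0 < d /\ G <> it P (b i) /\ (forall e, 0 < e < d -> it P (b i - e) = G - e) /\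
    (forall e, 0 <= e < d -> it P (b i + e) = it P (b i) + e).
Proof.
  intros Hi HP. assert (Hbi : 0 <= b i < 1) by (apply b_range; lia).
  destruct (RCk P (b i) Hbi) as (dR&HdR&HR).
  assert (Hai : 0 < a i) by (apply Hpos; lia).
  destruct (Hperm i ltac:(lia)) as (Hti&_&Eti&_).
  destruct (Nat.eq_dec (tau i) n) as [Htn|Htn].
  -
    assert (Hl1 : forall e, 0 < e < a i -> T (b i - e) = 1 - e).
    { intros e He. rewrite left_step by (lia || lra). rewrite Htn, bt_n. reflexivity. }
    destruct P as [|P]. lia. destruct P as [|P].
    + exists 1, (Rmin dR (a i)). split. apply Rmin_pos; lra. split.
      * simpl. pose proof (T_range _ Hbi). lra.
      * split; intros e He; pose proof (Rmin_l dR (a i)); pose proof (Rmin_r dR (a i)).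
        simpl. apply Hl1. lra. apply HR. lra.
    + destruct (Hperm n ltac:(lia)) as (Htn1&_&Etn&_).
      assert (Htn2 : tau n <> n). { intro E. apply Nat.lt_neq with (n := i) (m := n). lia. rewrite <- Eti, <- Etn, Htn, E. reflexivity. }
      destruct (Hperm (tau n + 1)%nat ltac:(lia)) as (_&Hr&_&Er).
      set (r := tauinv (tau n + 1)%nat) in *.
      assert (Hr1 : r <> 1%nat). { intro E. destruct Hfs as (_&Hf2&_). apply Hf2. rewrite <- E, Er. lia. }
      set (t := (r - 1)%nat).
      assert (ETt : T (b t) = bt (tau n)). { unfold t. rewrite T_left by lia. rewrite Er. f_equal. lia. }
      assert (HT0 : T (b t) <> 0). { rewrite ETt. assert (bt 0 < bt (tau n)) by (apply bt_lt; lia). change (btau a tauinv 0) with 0 in H. lra. }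
      pose proof (orbit_ok t ltac:(unfold t; lia) HT0) as OK.
      pose proof (T_range _ (b_range t ltac:(unfold t; lia))) as RT.
      destruct (LCk P (T (b t)) RT (fun j _ => OK j)) as (dL&HdL&HL).
      assert (Han : 0 < a n) by (apply Hpos; lia).
      assert (Hn1 : forall e, 0 < e < a n -> T (1 - e) = T (b t) - e).
      { intros e He. rewrite <- Hsum. rewrite (left_step n e) by (lia || lra). rewrite ETt. reflexivity. }
      set (d := Rmin (Rmin dR (a i)) (Rmin (a n) dL)).
      assert (0 < d) by (apply Rmin_pos; apply Rmin_pos; lra).
      assert (d <= dR /\ d <= a i /\ d <= a n /\ d <= dL).
      { unfold d. pose proof (Rmin_l (Rmin dR (a i)) (Rmin (a n) dL)). pose proof (Rmin_r (Rmin dR (a i)) (Rmin (a n) dL)).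
        pose proof (Rmin_l dR (a i)). pose proof (Rmin_r dR (a i)). pose proof (Rmin_l (a n) dL). pose proof (Rmin_r (a n) dL). lra. }
      exists (it P (T (b t))), d. split; auto. split; [|split].
      * intro E. rewrite !it_S in E. apply it_inj in E.
        -- apply T_inj in E; [|apply b_range; unfold t; lia|apply T_range; auto].
           apply (keaneP 1 (b i) ltac:(lia)). exists i. split. lia. auto. simpl. rewrite <- E.
           exists t. split. unfold t; lia. auto.
        -- apply RT.
        -- apply T_range. apply T_range. auto.
      * intros e He. rewrite !it_S, Hl1 by lra. rewrite Hn1 by lra. apply HL. lra.
      * intros e He. apply HR. lra.
  -
    destruct (Hperm (tau i + 1)%nat ltac:(lia)) as (_&Hr&_&Er).
    set (r := tauinv (tau i + 1)%nat) in *.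
    set (t := (r - 1)%nat).
    assert (ETt : T (b t) = bt (tau i)). { unfold t. rewrite T_left by lia. rewrite Er. f_equal. lia. }
    assert (HT0 : T (b t) <> 0). { rewrite ETt. assert (bt 0 < bt (tau i)) by (apply bt_lt; lia). change (btau a tauinv 0) with 0 in H. lra. }
    pose proof (orbit_ok t ltac:(unfold t; lia) HT0) as OK.
    pose proof (T_range _ (b_range t ltac:(unfold t; lia))) as RT.
    destruct P as [|P]. lia.
    destruct (LCk P (T (b t)) RT (fun j _ => OK j)) as (dL&HdL&HL).
    set (d := Rmin (Rmin dR (a i)) dL).
    assert (0 < d) by (apply Rmin_pos; [apply Rmin_pos|]; lra).
    assert (d <= dR /\ d <= a i /\ d <= dL).
    { unfold d. pose proof (Rmin_l (Rmin dR (a i)) dL). pose proof (Rmin_r (Rmin dR (a i)) dL).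
      pose proof (Rmin_l dR (a i)). pose proof (Rmin_r dR (a i)). lra. }
    exists (it P (T (b t))), d. split; auto. split; [|split].
    + intro E. rewrite it_S in E. apply it_inj in E.
      * apply T_inj in E; try apply b_range; try (unfold t; lia); try lia.
        apply b_inj in E; try (unfold t; lia).
        destruct Hfs as (Hsp&_). apply (Hsp i ltac:(lia)). 
        assert (r = S i) by (unfold t in E; lia). rewrite <- H1, Er. lia.
      * apply RT.
      * apply T_range. auto.
    + intros e He. rewrite it_S, left_step by (lia || lra). rewrite <- ETt. apply HL. lra.
    + intros e He. apply HR. lra.
Qed.

Lemma shift_letters K u v c : 0 <= u < 1 -> 0 <= v < 1 -> letters K c u v -> it K v - it K u = v - u.
Proof.
  intros Hu Hv HL. destruct (Rle_lt_dec u v).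
  - rewrite (same_letters K u v c r HL K (Nat.le_refl K) v) by lra. lra.
  - assert (HL' : letters K c v u) by (intros j Hj; destruct (HL j Hj) as (?&?&?); auto).
    rewrite (same_letters K v u c ltac:(lra) HL' K (Nat.le_refl K) u) by lra. lra.
Qed.

Definition orbit_of (g : word) (M : nat) (y : Z -> R) :=
  (forall k, 0 <= y k < 1) /\ (forall k, y (k+1)%Z = T (y k)) /\
  (forall k, (Z.abs k <= Z.of_nat M)%Z -> (1 <= g k <= n)%nat /\ inJ a (g k) (y k)).

Lemma orbit_shift y M g : orbit_of g M y -> forall k m, y (k + Z.of_nat m)%Z = it m (y k).
Proof.
  intros (_&Hs&_) k m. induction m. simpl. f_equal. lia.
  rewrite Nat2Z.inj_succ. replace (k + Z.succ (Z.of_nat m))%Z with ((k + Z.of_nat m) + 1)%Z by lia.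
  rewrite Hs, IHm. reflexivity.
Qed.

Lemma itin_orbit x g : regular n a tau tauinv x -> is_itinerary n a tau tauinv x g ->
  exists y, orbit_of g 0 y /\ forall k, (1 <= g k <= n)%nat /\ inJ a (g k) (y k).
Proof.
  intros [Hx Hreg] Hit.
  assert (Hx1 : x <> 1) by (intro E; apply Hreg; right; left; auto).
  assert (Hx' : 0 <= x < 1) by lra.
  set (y := fun k => proj1_sig (constructive_indefinite_description _ (proj2 (Hit k)))).
  assert (Hy : forall k, Tpow n a tau tauinv k x (y k) /\ inJ a (g k) (y k)).
  { intros k. unfold y. destruct (constructive_indefinite_description _ _) as (z&Hz). simpl. auto. }
  assert (Hpos' : forall k, (0 <= k)%Z -> y k = it (Z.to_nat k) x).
  { intros k Hk. destruct (Hy k) as ([(_&E)|(Hk'&_)]&_). auto. lia. }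
  assert (Hneg : forall k, (k < 0)%Z -> 0 <= y k < 1 /\ it (Z.to_nat (-k)) (y k) = x).
  { intros k Hk. destruct (Hy k) as ([(Hk'&_)|(_&H1&H2)]&_). lia. auto. }
  assert (Rg : forall k, 0 <= y k < 1).
  { intros k. destruct (Z_lt_le_dec k 0). apply Hneg; auto. rewrite Hpos' by auto. apply it_range; auto. }
  exists y. split; [split; [auto|split]|].
  - intros k. destruct (Z_lt_le_dec k (-1)).
    + destruct (Hneg k ltac:(lia)) as (_&E1). destruct (Hneg (k+1)%Z ltac:(lia)) as (_&E2).
      replace (Z.to_nat (-k)) with (S (Z.to_nat (-(k+1)))) in E1 by lia.
      rewrite it_S in E1. apply (it_inj (Z.to_nat (- (k + 1)))). apply Rg. apply T_range, Rg. congruence.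
    + destruct (Z.eq_dec k (-1)).
      * subst k. destruct (Hneg (-1)%Z ltac:(lia)) as (_&E1). simpl in E1.
        rewrite Hpos' by lia. simpl. auto.
      * rewrite !Hpos' by lia. replace (Z.to_nat (k+1)) with (S (Z.to_nat k)) by lia. reflexivity.
  - intros k _. destruct (Hit k). split; auto. apply Hy.
  - intros k. destruct (Hit k). split; auto. apply Hy.
Qed.

Lemma inX_orbit g : inX n a tau tauinv g -> forall M, exists y, orbit_of g M y.
Proof.
  intros HX M. destruct (HX M) as (g'&(x&Hreg&Hit)&Hag).
  destruct (itin_orbit x g' Hreg Hit) as (y&(H1&H2&_)&H4). exists y. split; [auto|split; [auto|]].
  intros k Hk. rewrite (Hag k Hk). apply H4.
Qed.

Lemma core (al be : word) (m0 N : Z) : inX n a tau tauinv al -> inX n a tau tauinv be ->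
  (al m0 < be m0)%nat -> (forall j, (j < m0)%Z -> al j = be j) ->
  (forall j, (N <= j)%Z -> al j = be j) -> (m0 < N)%Z -> False.
Proof.
  intros Hal Hbe Hlt Hpast Hfut HmN.
  destruct (inX_orbit al Hal (Z.to_nat (Z.abs m0))) as (y0&_&_&Y0).
  destruct (inX_orbit be Hbe (Z.to_nat (Z.abs m0))) as (y1&_&_&Y1).
  destruct (Y0 m0 ltac:(lia)) as (Hi&_). destruct (Y1 m0 ltac:(lia)) as (Hi'&_).
  set (i := al m0) in *. set (i' := be m0) in *.
  set (P := Z.to_nat (N - m0)).
  destruct (local i P ltac:(lia) ltac:(unfold P; lia)) as (G&d&Hd&HGH&HL&HR).
  set (H := it P (b i)) in *.
  assert (HGH' : 0 < Rabs (G - H)) by (apply Rabs_pos_lt; lra).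
  set (l := Rmin d (Rabs (G - H) / 3)).
  assert (Hl : 0 < l) by (apply Rmin_pos; lra).
  assert (Hld : l <= d) by apply Rmin_l. assert (Hl3 : l <= Rabs (G - H) / 3) by apply Rmin_r.
  destruct (shrink l Hl) as (K0&HK0).
  set (M := (Z.to_nat (Z.abs m0 + Z.abs N) + K0)%nat).
  destruct (inX_orbit al Hal M) as (y&Hy).
  destruct (inX_orbit be Hbe M) as (y'&Hy').
  pose proof (orbit_shift y M al Hy) as Sy. pose proof (orbit_shift y' M be Hy') as Sy'.
  destruct Hy as (Ry&_&Ly). destruct Hy' as (Ry'&_&Ly').
  set (k0 := (m0 - Z.of_nat K0)%Z).
  assert (LP : letters K0 (fun j => al (k0 + Z.of_nat j)%Z) (y k0) (y' k0)).
  { intros j Hj. rewrite <- Sy, <- Sy'.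
    assert (Hk : (Z.abs (k0 + Z.of_nat j) <= Z.of_nat M)%Z) by (unfold k0, M; lia).
    destruct (Ly _ Hk) as (A1&A2). destruct (Ly' _ Hk) as (B1&B2).
    rewrite <- (Hpast (k0 + Z.of_nat j)%Z) in B2 by (unfold k0; lia). auto. }
  pose proof (HK0 K0 _ _ _ (Nat.le_refl K0) (Ry k0) (Ry' k0) LP) as Past.
  pose proof (shift_letters K0 _ _ _ (Ry k0) (Ry' k0) LP) as Sh.
  rewrite <- Sy, <- Sy' in Sh. replace (k0 + Z.of_nat K0)%Z with m0 in Sh by (unfold k0; lia).
  assert (LF : letters K0 (fun j => al (N + Z.of_nat j)%Z) (y N) (y' N)).
  { intros j Hj. rewrite <- Sy, <- Sy'.
    assert (Hk : (Z.abs (N + Z.of_nat j) <= Z.of_nat M)%Z) by (unfold M; lia).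
    destruct (Ly _ Hk) as (A1&A2). destruct (Ly' _ Hk) as (B1&B2).
    rewrite <- (Hfut (N + Z.of_nat j)%Z) in B2 by lia. auto. }
  pose proof (HK0 K0 _ _ _ (Nat.le_refl K0) (Ry N) (Ry' N) LF) as Fut.
  replace N with (m0 + Z.of_nat P)%Z in Fut by (unfold P; lia).
  rewrite !Sy, !Sy' in Fut.
  destruct (Ly m0 ltac:(unfold M; lia)) as (_&Jx). destruct (Ly' m0 ltac:(unfold M; lia)) as (_&Jx').
  fold i in Jx. fold i' in Jx'. unfold inJ in Jx, Jx'.
  assert (Hbb : b i <= b (i' - 1)) by (apply b_le; lia).
  set (x := y m0) in *. set (x' := y' m0) in *.
  assert (Hxx : Rabs (x' - x) < l) by (rewrite Sh; auto).
  apply Rabs_def2 in Hxx.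
  assert (E1 : it P x = G - (b i - x)).
  { rewrite <- HL by lra. f_equal. lra. }
  assert (E2 : it P x' = H + (x' - b i)).
  { rewrite <- HR by lra. f_equal. lra. }
  rewrite E1, E2 in Fut. apply Rabs_def2 in Fut.
  assert (Rabs (G - H) < 3 * l).
  { unfold Rabs. destruct (Rcase_abs (G - H)); lra. }
  lra.
Qed.
End S.

Lemma min_nat (Pk : nat -> Prop) : (exists k, Pk k) -> exists k, Pk k /\ forall j, (j < k)%nat -> ~ Pk j.
Proof.
  intros (k&Hk). induction k as [k IH] using lt_wf_ind.
  destruct (classic (exists j, (j < k)%nat /\ Pk j)) as [(j&Hj&Pj)|Hno].
  - apply (IH j Hj Pj).
  - exists k. split; auto. intros j Hj Pj. apply Hno. eauto.
Qed.

Theorem theorem4p6 (n : nat) (a : nat -> R) (tau tauinv : nat -> nat)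
  (Hn : (2 <= n)%nat)
  (Hpos : forall i, (1 <= i <= n)%nat -> 0 < a i)
  (Hsum : bsum a n = 1)
  (Hperm : is_perm n tau tauinv)
  (Hirr : irreducible n tau)
  (Hfs : fully_split n tau tauinv)
  (Hkeane : keane n a tau tauinv) :
  forall alpha beta : word,
    inX n a tau tauinv alpha -> inX n a tau tauinv beta ->
    (exists N : nat, forall i : Z, (Z.of_nat N <= Z.abs i)%Z -> alpha i = beta i) ->
    forall i : Z, alpha i = beta i.
Proof.
  intros al be Hal Hbe (N&HN) i. apply NNPP. intro Hne.
  assert (HiN : (Z.abs i < Z.of_nat N)%Z).
  { destruct (Z_lt_le_dec (Z.abs i) (Z.of_nat N)); auto. exfalso. apply Hne. apply HN. auto. }
  set (Pk := fun k : nat => al (Z.of_nat k - Z.of_nat N)%Z <> be (Z.of_nat k - Z.of_nat N)%Z).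
  destruct (min_nat Pk) as (k0&Hk0&Hmin).
  { exists (Z.to_nat (i + Z.of_nat N)). unfold Pk. replace (Z.of_nat (Z.to_nat (i + Z.of_nat N)) - Z.of_nat N)%Z with i by lia. auto. }
  set (m0 := (Z.of_nat k0 - Z.of_nat N)%Z).
  assert (Hm0N : (Z.abs m0 < Z.of_nat N)%Z).
  { destruct (Z_lt_le_dec (Z.abs m0) (Z.of_nat N)); auto. exfalso. apply Hk0. apply HN. auto. }
  assert (Hpast : forall j, (j < m0)%Z -> al j = be j).
  { intros j Hj. destruct (Z_lt_le_dec (-(Z.of_nat N)) j).
    - apply NNPP. intro Hn'. apply (Hmin (Z.to_nat (j + Z.of_nat N))). unfold m0 in Hj. lia.
      unfold Pk. replace (Z.of_nat (Z.to_nat (j + Z.of_nat N)) - Z.of_nat N)%Z with j by lia. auto.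
    - apply HN. lia. }
  assert (Hfut : forall j, (Z.of_nat N <= j)%Z -> al j = be j) by (intros j Hj; apply HN; lia).
  destruct (lt_eq_lt_dec (al m0) (be m0)) as [[Hlt|Heq]|Hgt].
  - eapply (core n a tau tauinv) with (al := al) (be := be) (m0 := m0) (N := Z.of_nat N); eauto. lia.
  - apply Hk0. exact Heq.
  - eapply (core n a tau tauinv) with (al := be) (be := al) (m0 := m0) (N := Z.of_nat N); eauto.
    intros j Hj; symmetry; auto. intros j Hj; symmetry; auto. lia.
Qed.
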